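(* Let $m\ge 2$, $n\ge1$ be integers, let $\mathcal P=(p_{i_1 i_2\dots i_m})\in\mathbb R^{[m,n]}$ be a transition probability tensor with first-index flattening $R\in\mathbb R^{n\times n^{m-1}}$, let $v\in\mathbb R^n$ be a stochastic vector, and let $\alpha\in[0,1)$ satisfy $\alpha<\frac{1}{m-1}$. Define $f:\mathbb R^n\to\mathbb R^n$ by $f(\mathbf{x})=\alpha R(\mathbf{x}\otimes\cdots\otimes\mathbf{x})+(1-\alpha)v-\mathbf{x}$ (with $m-1$ Kronecker factors $\mathbf{x}$), with Jacobian $$J_f(\mathbf{x})=\alpha R\Big(I\otimes\mathbf{x}\otimes\cdots\otimes\mathbf{x}+\mathbf{x}\otimes I\otimes\mathbf{x}\otimes\cdots\otimes\mathbf{x}+\cdots+\mathbf{x}\otimes\cdots\otimes\mathbf{x}\otimes I\Big)-I.$$ Consider the Newton iteration with initial vector $\mathbf{x}_0=0$: $$\mathbf{x}_{k+1}=\mathbf{x}_k-J_f(\mathbf{x}_k)^{-1}f(\mathbf{x}_k),\quad k=0,1,2,\dots$$ Then this iteration converges to the unique solution $\mathbf{x}$ of the multilinear PageRank equation $\mathbf{x}=\alpha R(\mathbf{x}\otimes\cdots\otimes\mathbf{x})+(1-\alpha)v$ (i.e. $f(\mathbf{x})=0$).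
   Context: A transition probability tensor $\mathcal P\in\mathbb R^{[m,n]}$ (order $m$, each dimension $n$) satisfies $p_{i_1\dots i_m}\ge0$ and $\sum_{i_1=1}^n p_{i_1 i_2\dots i_m}=1$ for all $(i_2,\dots,i_m)$. A vector is stochastic if its entries are non-negative and sum to one. The flattening $R$ along the first index is the $n\times n^{m-1}$ matrix with $\big(R(y^{(2)}\otimes\cdots\otimes y^{(m)})\big)_i=\sum_{i_2,\dots,i_m=1}^n p_{i i_2\dots i_m}y^{(2)}_{i_2}\cdots y^{(m)}_{i_m}$ for all $y^{(j)}\in\mathbb R^n$. $I$ is the $n\times n$ identity, $\otimes$ the Kronecker product; in the Jacobian, each of the $m-1$ summands is a Kronecker product of $m-1$ factors with $I$ in exactly one position and $\mathbf{x}$ (as an $n\times1$ matrix) in the other $m-2$ positions. *)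

(* Defs.v *)
From HB Require Import structures.
From mathcomp Require Import all_boot all_order all_algebra.
From mathcomp Require Import all_classical all_reals all_analysis.
Set Implicit Arguments. Unset Strict Implicit. Unset Printing Implicit Defensive.
Import Order.TTheory GRing.Theory Num.Theory.
Local Open Scope ring_scope.

(* An order-m tensor P in R^[m,n] is represented as a function
   P : 'I_n -> {ffun 'I_m.-1 -> 'I_n} -> R with
   P i s = p_{i, s 0, s 1, ..., s (m-2)}  (i = first index). *)

Section Defs.
Variable R : realType.

Definition transition_tensor (n k : nat) (P : 'I_n -> {ffun 'I_k -> 'I_n} -> R) :=
  (forall i s, 0 <= P i s) /\ (forall s, \sum_(i < n) P i s = 1).

Definition stochastic (n : nat) (v : 'cV[R]_n) :=
  (forall i, 0 <= v i ord0) /\ \sum_(i < n) v i ord0 = 1.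

(* flattening R along the first index, applied to y^(2) (x) ... (x) y^(m):
   (R (ys 0 (x) ... (x) ys (k-1)))_i = sum_s P i s * prod_j (ys j)_(s j) *)
Definition flat_apply (n k : nat) (P : 'I_n -> {ffun 'I_k -> 'I_n} -> R)
  (ys : 'I_k -> 'cV[R]_n) : 'cV[R]_n :=
  \col_i \sum_(s : {ffun 'I_k -> 'I_n}) P i s * \prod_(j < k) ys j (s j) ord0.

Definition mlpr_f (n k : nat) (P : 'I_n -> {ffun 'I_k -> 'I_n} -> R)
  (alpha : R) (v x : 'cV[R]_n) : 'cV[R]_n :=
  alpha *: flat_apply P (fun _ => x) + (1 - alpha) *: v - x.

(* Jacobian: alpha R (sum_j x (x)..(x) I (x)..(x) x  [I at position j]) - I.
   Column l of R (x(x)..(x) I (x)..(x) x) is R (x(x)..(x) e_l (x)..(x) x). *)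
Definition mlpr_J (n k : nat) (P : 'I_n -> {ffun 'I_k -> 'I_n} -> R)
  (alpha : R) (x : 'cV[R]_n) : 'M[R]_n :=
  \matrix_(i, l) (alpha * \sum_(j < k)
      flat_apply P (fun j' => if j' == j then delta_mx l ord0 else x) i ord0)
  - 1%:M.

Fixpoint newton (n k : nat) (P : 'I_n -> {ffun 'I_k -> 'I_n} -> R)
  (alpha : R) (v : 'cV[R]_n) (t : nat) : 'cV[R]_n :=
  match t with
  | 0 => 0
  | t'.+1 => let xt := newton P alpha v t' in
             xt - invmx (mlpr_J P alpha xt) *m mlpr_f P alpha v xt
  end.

End Defs.

(* Main.v *)
Require Import Defs.
From HB Require Import structures.
From mathcomp Require Import all_boot all_order all_algebra.
From mathcomp Require Import all_classical all_reals all_analysis.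
From mathcomp Require Import ring lra.
Import Order.TTheory GRing.Theory Num.Theory.
Import numFieldNormedType.Exports.
Local Open Scope classical_set_scope.
Local Open Scope ring_scope.
Section Scalar.
Variable R : realType.

Lemma pow_lb (s : R) (k : nat) : 0 <= s -> s <= 1 ->
  k%:R * s ^+ k.-1 * (1 - s) <= 1 - s ^+ k.
Proof.
move=> s0 s1; elim: k => [|k IH]; first by rewrite mul0r mul0r expr0 subrr.
case: k IH => [|k] IH; first by rewrite /= expr0 expr1 mulr1 mul1r.
rewrite /= in IH *.
have e1 : s ^+ k.+2 = s * s ^+ k.+1 by rewrite exprS.
have e2 : s ^+ k.+1 = s * s ^+ k by rewrite exprS.
have p0 : 0 <= s ^+ k by rewrite exprn_ge0.
have eK1 : (k.+1)%:R = k%:R + 1 :> R by rewrite natr1.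
have eK2 : (k.+2)%:R = k%:R + 1 + 1 :> R by rewrite !natr1.
have K0 : 0 <= k%:R :> R by rewrite ler0n.
rewrite e2 eK1 in IH; rewrite e1 e2 eK2.
have h : 0 <= (k%:R + 1) * s ^+ k * (1 - s) * (1 - s).
  by rewrite !mulr_ge0 // ?subr_ge0 // addr_ge0.
nra.
Qed.

Lemma pow_ub (s : R) (k : nat) : 0 <= s -> s <= 1 ->
  1 - s ^+ k <= k%:R * (1 - s).
Proof.
move=> s0 s1; elim: k => [|k IH]; first by rewrite mul0r expr0 subrr.
rewrite exprS -natr1.
have p0 : 0 <= s ^+ k by rewrite exprn_ge0.
have p1 : s ^+ k <= 1 by rewrite exprn_ile1.
nra.
Qed.

Lemma prod_conv (k : nat) (a b : 'I_k -> R) :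
  (forall j, 0 <= a j) -> (forall j, a j <= b j) ->
  \sum_(j < k) \prod_(j' < k) (if j' == j then b j' - a j' else a j')
    <= \prod_(j < k) b j - \prod_(j < k) a j.
Proof.
elim: k a b => [|k IH] a b a0 ab.
  by rewrite big_ord0 !big_ord0 subrr.
have wE (j' j : 'I_k) : (widen_ord (leqnSn k) j' == widen_ord (leqnSn k) j) = (j' == j).
  by rewrite -val_eqE /= val_eqE.
have wM (j : 'I_k) : (widen_ord (leqnSn k) j == ord_max) = false.
  by rewrite -val_eqE /= ltn_eqF.
have wM' (j : 'I_k) : (ord_max == widen_ord (leqnSn k) j) = false.
  by rewrite eq_sym wM.
rewrite big_ord_recr /= !(big_ord_recr k) /=.
under eq_bigr => j _ do (rewrite big_ord_recr /= wM'; under eq_bigr => i _ do rewrite wE).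
rewrite -mulr_suml eqxx.
under [X in _ + X * _]eq_bigr => j _ do rewrite wM.
set a' := fun j : 'I_k => a (widen_ord (leqnSn k) j).
set b' := fun j : 'I_k => b (widen_ord (leqnSn k) j).
have := IH a' b' (fun j => a0 _) (fun j => ab _).
set S := \sum_(j < k) _.
set A := \prod_(j < k) a' j.
set B := \prod_(j < k) b' j.
have S0 : 0 <= S.
  apply: sumr_ge0 => j _; apply: prodr_ge0 => j' _.
  by case: ifP => _; rewrite ?subr_ge0 ?a0 ?ab.
have A0 : 0 <= A by apply: prodr_ge0 => j _; exact: a0.
have am0 := a0 ord_max; have amb := ab ord_max.
move=> H; rewrite /A /B /a' /b' in H A0 *.
nra.
Qed.
End Scalar.

Section Mat.
Variable R : realType.
Variables n k : nat.
Variable P : 'I_n -> {ffun 'I_k -> 'I_n} -> R.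
Hypothesis P0 : forall i s, 0 <= P i s.
Hypothesis P1 : forall s, \sum_(i < n) P i s = 1.
Variable alpha : R.
Hypothesis a0 : 0 <= alpha.
Hypothesis ak : alpha * k%:R < 1.
Variable v : 'cV[R]_n.
Hypothesis v0 : forall i, 0 <= v i ord0.
Hypothesis v1 : \sum_(i < n) v i ord0 = 1.

Definition vsum (x : 'cV[R]_n) := \sum_(i < n) x i ord0.
Definition nn (x : 'cV[R]_n) := forall i, 0 <= x i ord0.
Definition G (x : 'cV[R]_n) : 'M[R]_n := \matrix_(i, l) (alpha * \sum_(j < k)
      flat_apply P (fun j' => if j' == j then delta_mx l ord0 else x) i ord0).
Definition g (x : 'cV[R]_n) := alpha *: flat_apply P (fun _ => x) + (1 - alpha) *: v.

Lemma JE x : mlpr_J P alpha x = G x - 1%:M. Proof. by []. Qed.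
Lemma fE x : mlpr_f P alpha v x = g x - x. Proof. by []. Qed.

Lemma vsumD x y : vsum (x + y) = vsum x + vsum y.
Proof. by rewrite /vsum -big_split; apply: eq_bigr => i _; rewrite mxE. Qed.
Lemma vsumN x : vsum (- x) = - vsum x.
Proof. by rewrite /vsum -sumrN; apply: eq_bigr => i _; rewrite mxE. Qed.
Lemma vsumB x y : vsum (x - y) = vsum x - vsum y.
Proof. by rewrite vsumD vsumN. Qed.
Lemma vsumZ a x : vsum (a *: x) = a * vsum x.
Proof. by rewrite /vsum mulr_sumr; apply: eq_bigr => i _; rewrite mxE. Qed.

Lemma flat_ge0 (ys : 'I_k -> 'cV[R]_n) : (forall j i, 0 <= ys j i ord0) -> nn (flat_apply P ys).
Proof.
move=> H i; rewrite mxE; apply: sumr_ge0 => s _; apply: mulr_ge0 => //.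
by apply: prodr_ge0 => j _.
Qed.

Lemma flat_sum (ys : 'I_k -> 'cV[R]_n) : vsum (flat_apply P ys) = \prod_(j < k) vsum (ys j).
Proof.
rewrite /vsum; under eq_bigr => i _ do rewrite mxE.
rewrite exchange_big /=.
under eq_bigr => s _ do rewrite -mulr_suml P1 mul1r.
by rewrite bigA_distr_bigA.
Qed.

Lemma prod_if (a b : R) (j : 'I_k) :
  \prod_(j' < k) (if j' == j then a else b) = a * b ^+ k.-1.
Proof.
rewrite (bigD1 j) //= eqxx; congr (_ * _).
rewrite (eq_bigr (fun _ => b)); last by move=> j' /negbTE ->.
by rewrite prodr_const cardC1 card_ord.
Qed.

Lemma flat_lin (ys : 'I_k -> 'cV[R]_n) (j : 'I_k) (d : 'cV[R]_n) i :
  \sum_(l < n) d l ord0 * flat_apply P (fun j' => if j' == j then delta_mx l ord0 else ys j') i ord0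
  = flat_apply P (fun j' => if j' == j then d else ys j') i ord0.
Proof.
rewrite mxE; under eq_bigr => l _ do rewrite mxE mulr_sumr.
rewrite exchange_big /=; apply: eq_bigr => s _.
have E (w : 'cV[R]_n) : \prod_(j' < k) (if j' == j then w else ys j') (s j') ord0
   = w (s j) ord0 * \prod_(j' < k | j' != j) ys j' (s j') ord0.
  rewrite (bigD1 j) //= eqxx; congr (_ * _).
  by apply: eq_bigr => j' /negbTE ->.
rewrite E; under eq_bigr => l _ do rewrite E mxE.
rewrite (bigD1 (s j)) //= eqxx /= mul1r [X in _ + X = _]big1 ?addr0.
  by rewrite mulrCA.
by move=> l /negbTE; rewrite eq_sym => ->; rewrite /= mul0r mulr0 mulr0.
Qed.

Lemma G_ge0 x : nn x -> forall i l, 0 <= G x i l.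
Proof.
move=> x0 i l; rewrite mxE; apply: mulr_ge0 => //; apply: sumr_ge0 => j _.
apply: flat_ge0 => j' i'; case: ifP => _ //; rewrite mxE; exact: ler0n.
Qed.

Definition cc x := alpha * k%:R * vsum x ^+ k.-1.

Lemma G_col x l : \sum_(i < n) G x i l = cc x.
Proof.
under eq_bigr => i _ do rewrite mxE.
rewrite -mulr_sumr exchange_big /=.
under eq_bigr => j _ do rewrite -/(vsum _) flat_sum.
have Dl : vsum (delta_mx l ord0) = 1.
  rewrite /vsum (bigD1 l) //= mxE !eqxx /= big1 ?addr0 //.
  by move=> i /negbTE Hi; rewrite mxE Hi.
under eq_bigr => j _.
  rewrite (eq_bigr (fun j' => if j' == j then 1 else vsum x)); last first.
    by move=> j' _; case: ifP.
  rewrite prod_if mul1r.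
  over.
by rewrite sumr_const card_ord /cc -mulr_natr; ring.
Qed.

Lemma vsum_G x d : vsum (G x *m d) = cc x * vsum d.
Proof.
rewrite /vsum; under eq_bigr => i _ do rewrite mxE.
rewrite exchange_big /= mulr_sumr; apply: eq_bigr => l _.
by rewrite -mulr_suml G_col.
Qed.

Lemma Gd x d i : (G x *m d) i ord0
  = alpha * \sum_(j < k) flat_apply P (fun j' => if j' == j then d else x) i ord0.
Proof.
rewrite mxE; under eq_bigr => l _ do rewrite mxE -mulrA mulr_suml.
rewrite -mulr_sumr exchange_big /=; congr (_ * _); apply: eq_bigr => j _.
rewrite -(flat_lin (fun _ => x)); apply: eq_bigr => l _.
by rewrite mulrC.
Qed.


Lemma sum_flat (ys : 'I_k -> 'I_k -> 'cV[R]_n) i :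
  \sum_(j < k) flat_apply P (ys j) i ord0
  = \sum_s P i s * \sum_(j < k) \prod_(j' < k) ys j j' (s j') ord0.
Proof.
under eq_bigr => j _ do rewrite mxE.
by rewrite exchange_big /=; apply: eq_bigr => s _; rewrite mulr_sumr.
Qed.

Lemma conv x y : nn x -> nn (y - x) -> nn (g y - g x - G x *m (y - x)).
Proof.
move=> x0 yx i.
have K : 0 <= flat_apply P (fun _ => y) i ord0 - flat_apply P (fun _ => x) i ord0
   - \sum_(j < k) flat_apply P (fun j' => if j' == j then y - x else x) i ord0.
  rewrite sum_flat !mxE -!sumrB; apply: sumr_ge0 => s _.
  rewrite -!mulrBr; apply: mulr_ge0 => //; rewrite subr_ge0.
  have yx' : forall j, x (s j) ord0 <= y (s j) ord0.
    by move=> j; have := yx (s j); rewrite !mxE subr_ge0.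
  have := @prod_conv R k (fun j => x (s j) ord0) (fun j => y (s j) ord0) (fun j => x0 _) yx'.
  rewrite lerBrDr => H; rewrite lerBrDr; apply: le_trans H.
  rewrite lerD2r; apply: ler_sum => j _; rewrite le_eqVlt; apply/orP; left; apply/eqP.
  by apply: eq_bigr => j' _; case: ifP => _; rewrite ?mxE.
idtac.
have -> : (g y - g x - G x *m (y - x)) i ord0 = (g y) i ord0 - (g x) i ord0 - (G x *m (y - x)) i ord0.
  by rewrite !mxE.
rewrite Gd /g.
move: K; move: (\sum_(j < k) _) => S.
move: (flat_apply P (fun _ => y)) (flat_apply P (fun _ => x)) => Fy Fx K.
rewrite !mxE.
have -> : alpha * Fy i ord0 + (1 - alpha) * v i ord0 - (alpha * Fx i ord0 + (1 - alpha) * v i ord0) - alpha * S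
   = alpha * (Fy i ord0 - Fx i ord0 - S) by ring.
exact: mulr_ge0.
Qed.

Lemma cc_lt1 x : nn x -> vsum x <= 1 -> cc x < 1.
Proof.
move=> x0 x1; have s0 : 0 <= vsum x by apply: sumr_ge0.
have : vsum x ^+ k.-1 <= 1 by rewrite exprn_ile1.
have : 0 <= vsum x ^+ k.-1 by rewrite exprn_ge0.
have : 0 <= alpha * k%:R by rewrite mulr_ge0 ?ler0n.
rewrite /cc => hak _ h; apply: (le_lt_trans _ ak); rewrite -[X in _ <= X]mulr1; exact: (ler_wpM2l hak).
Qed.

Lemma pos x z : nn x -> vsum x <= 1 -> nn (z - G x *m z) -> nn z.
Proof.
move=> x0 x1 H.
pose zm := \col_i Num.max 0 (- z i ord0).
have zm0 : nn zm by move=> i; rewrite mxE le_max lexx.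
have zmz : forall i, - zm i ord0 <= z i ord0.
  by move=> i; rewrite mxE lerNl le_max lexx orbT.
have Gz : forall i, - (G x *m zm) i ord0 <= (G x *m z) i ord0.
  move=> i; rewrite !mxE -sumrN; apply: ler_sum => l _.
  rewrite -mulrN; apply: ler_wpM2l; first exact: G_ge0.
  exact: zmz.
have Gzm0 : nn (G x *m zm).
  by move=> i; rewrite mxE; apply: sumr_ge0 => l _; apply: mulr_ge0; [exact: G_ge0|].
have zmG : forall i, zm i ord0 <= (G x *m zm) i ord0.
  move=> i; have Hi : (G x *m z) i ord0 <= z i ord0.
    by move: (H i); rewrite !mxE subr_ge0.
  rewrite [zm i ord0]mxE ge_max; apply/andP; split; first exact: Gzm0.
  have := Gz i; lra.
have : vsum zm <= cc x * vsum zm.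
  by rewrite -vsum_G; apply: ler_sum => i _; exact: zmG.
have := cc_lt1 x x0 x1; have s0 : 0 <= vsum zm by apply: sumr_ge0.
move=> c1 hh; have sz : vsum zm = 0 by nra.
move=> i; have := zmz i; suff -> : zm i ord0 = 0 by rewrite oppr0.
by move/eqP: sz; rewrite psumr_eq0 // => /allP/(_ i (mem_index_enum _))/implyP/(_ isT)/eqP.
Qed.

Lemma unitJ x : nn x -> vsum x <= 1 -> (G x - 1%:M) \in unitmx.
Proof.
move=> x0 x1; rewrite -unitmx_tr -row_free_unit; apply: inj_row_free => u Hu.
have Hz : (G x - 1%:M) *m u^T = 0 by rewrite -[_ *m _]trmxK trmx_mul trmxK Hu trmx0.
have E : forall z, (G x - 1%:M) *m z = 0 -> nn z.
  move=> z Hz' ; apply: (pos x z x0 x1) => i.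
  have e : z - G x *m z = - ((G x - 1%:M) *m z) by rewrite mulmxBl mul1mx opprB.
  by rewrite e Hz' oppr0 mxE.
have E1 := E _ Hz.
have E2 : nn (- u^T) by apply: E; rewrite mulmxN Hz oppr0.
apply/matrixP => i j; rewrite ord1 mxE; apply/eqP; rewrite eq_le.
have := E1 j; have := E2 j; rewrite !mxE => h1 h2.
apply/andP; split; lra.
Qed.


Hypothesis a1 : alpha < 1.

Definition step x := x - invmx (mlpr_J P alpha x) *m mlpr_f P alpha v x.
Definition Inv x := [/\ nn x, vsum x <= 1 & nn (mlpr_f P alpha v x)].

Lemma step_d x : nn x -> vsum x <= 1 ->
  (step x - x) - G x *m (step x - x) = mlpr_f P alpha v x.
Proof.
move=> x0 x1; have U := unitJ x x0 x1.
have e : step x - x = - (invmx (G x - 1%:M) *m mlpr_f P alpha v x).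
  by rewrite /step JE addrC addKr.
have e2 : (G x - 1%:M) *m (step x - x) = - mlpr_f P alpha v x.
  by rewrite e mulmxN mulKVmx.
have e3 : (step x - x) - G x *m (step x - x) = - ((G x - 1%:M) *m (step x - x)).
  by rewrite mulmxBl mul1mx opprB.
by rewrite e3 e2 opprK.
Qed.

Lemma vsum_f x : vsum (mlpr_f P alpha v x) = alpha * vsum x ^+ k + (1 - alpha) - vsum x.
Proof.
rewrite fE /g vsumB vsumD !vsumZ flat_sum prodr_const card_ord.
by rewrite /vsum v1 mulr1.
Qed.

Lemma matE (A B : 'cV[R]_n) : (forall i, A i ord0 = B i ord0) -> A = B.
Proof. by move=> H; apply/matrixP => i j; rewrite ord1. Qed.

Lemma step_inv x : Inv x -> Inv (step x) /\ nn (step x - x).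
Proof.
case=> x0 x1 f0.
have Hd := step_d x x0 x1.
have d0 : nn (step x - x) by apply: (pos x _ x0 x1); rewrite Hd.
have s0 : nn (step x).
  by move=> i; have := d0 i; have := x0 i; rewrite !mxE; lra.
split => //; split => //.
  have := congr1 vsum Hd; rewrite vsumB vsum_G vsum_f vsumB.
  have := cc_lt1 x x0 x1; rewrite /cc.
  have := @pow_lb R (vsum x) k (sumr_ge0 _ (fun i _ => x0 i)) x1.
  have p0 : 0 <= vsum x ^+ k.-1 by rewrite exprn_ge0 // sumr_ge0.
  have q0 : 0 <= vsum x ^+ k by rewrite exprn_ge0 // sumr_ge0.
  have sx0 : 0 <= vsum x by rewrite sumr_ge0.
  move: (vsum (step x)) (vsum x) (vsum x ^+ k.-1) (vsum x ^+ k) p0 q0 sx0 x1 => S s p q p0 q0 sx0 x1' h1 h2 h3.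
  have h4 := mulr_ge0 a0 (ler0n R k).
  have h1' : alpha * (k%:R * p * (1 - s)) <= alpha * (1 - q) by rewrite ler_wpM2l.
  nra.
have E : mlpr_f P alpha v (step x) = g (step x) - g x - G x *m (step x - x).
  move: Hd; rewrite !fE.
  move: (G x *m (step x - x)) => M; move: (g (step x)) => gx'; move: (g x) => gx.
  move: (step x) => x' Hd; apply: matE => i.
  have := congr1 (fun A : 'cV[R]_n => A i ord0) Hd; rewrite /= !mxE; lra.
by rewrite E; apply: conv.
Qed.

Lemma step_ub x y : Inv x -> nn y -> mlpr_f P alpha v y = 0 -> nn (y - x) -> nn (y - step x).
Proof.
case=> x0 x1 f0 y0 fy yx.
have Hd := step_d x x0 x1.
apply: (pos x _ x0 x1).
have C := conv x y x0 yx.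
have L : G x *m (y - step x) = G x *m (y - x) - G x *m (step x - x).
  rewrite -mulmxBr; congr (_ *m _); move: (step x) => x'; apply: matE => i; rewrite !mxE; lra.
rewrite L; move: C Hd fy; rewrite !fE.
move: (G x *m (step x - x)) => M; move: (G x *m (y - x)) => M2.
move: (g y) => gy; move: (g x) => gx; move: (step x) => x' C Hd fy i.
have := congr1 (fun A : 'cV[R]_n => A i ord0) Hd; have := congr1 (fun A : 'cV[R]_n => A i ord0) fy.
have := C i; rewrite /= !mxE; lra.
Qed.


Lemma fEi (z : 'cV[R]_n) i : (mlpr_f P alpha v z) i ord0 =
  alpha * (\sum_s P i s * \prod_(j < k) z (s j) ord0) + (1 - alpha) * v i ord0 - z i ord0.
Proof. by rewrite !mxE. Qed.

Lemma main_sec :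
  (forall t, mlpr_J P alpha (newton P alpha v t) \in unitmx) /\
  exists x : 'cV[R]_n,
    [/\ stochastic x, mlpr_f P alpha v x = 0,
        (forall y : 'cV[R]_n, stochastic y -> mlpr_f P alpha v y = 0 -> y = x) &
        (forall i : 'I_n, (fun t : nat => newton P alpha v t i ord0) @ \oo --> (x i ord0 : R))].
Proof.
pose xs t := newton P alpha v t.
have xsS t : xs t.+1 = step (xs t) by [].
have Inv0 : Inv 0.
  split.
  - by move=> i; rewrite mxE.
  - by rewrite /vsum big1 // => i _; rewrite mxE.
  rewrite fE /g; have F0 : nn (flat_apply P (fun _ => 0)) by apply: flat_ge0 => j i; rewrite mxE.
  move: (flat_apply P (fun _ => 0)) F0 => F F0 i.
  have := F0 i; have := v0 i; rewrite !mxE => h1 h2.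
  have := mulr_ge0 a0 h2; have : 0 <= 1 - alpha by rewrite subr_ge0 ltW.
  move=> h3 h4; have := mulr_ge0 h3 h1; lra.
have InvT t : Inv (xs t).
  elim: t => [|t IH] //; rewrite xsS; exact: (step_inv _ IH).1.
have monoT t : nn (xs t.+1 - xs t) by rewrite xsS; exact: (step_inv _ (InvT t)).2.
have bnd t i : xs t i ord0 <= 1.
  case: (InvT t) => x0 x1 _; apply: le_trans x1.
  rewrite /vsum (bigD1 i) //= lerDl; apply: sumr_ge0 => j _; exact: x0.
pose u i t := xs t i ord0.
have und i : nondecreasing_seq (u i).
  apply/nondecreasing_seqP => t; have := monoT t i; rewrite /u !mxE subr_ge0 //.
pose x := \col_i sup (range (u i)).
have Hc i : u i @ \oo --> x i ord0.
  rewrite mxE; apply: nondecreasing_cvgn => //; exists 1 => _ [t _ <-]; exact: bnd.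
have x0 : nn x.
  move=> i; apply: (ler_cvg_to (cvg_cst 0) (Hc i)); apply: nearW => t.
  by case: (InvT t) => h _ _; exact: h.
split.
  by move=> t; rewrite JE; case: (InvT t) => h1 h2 _; exact: unitJ.
have fb t i : 0 <= (mlpr_f P alpha v (xs t)) i ord0 <= u i t.+1 - u i t.
  case: (InvT t) => h0 h1 hf; apply/andP; split; first exact: hf.
  have Hd := step_d (xs t) h0 h1; rewrite -xsS in Hd.
  have Gd0 : 0 <= (G (xs t) *m (xs t.+1 - xs t)) i ord0.
    rewrite mxE; apply: sumr_ge0 => l _; apply: mulr_ge0; [exact: G_ge0 | exact: monoT].
  rewrite -Hd /u; move: Gd0; move: (G (xs t) *m _) => M.
  move: (xs t.+1) (xs t) => x' xt.
  rewrite !mxE; lra.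
have fx0 : mlpr_f P alpha v x = 0.
  apply: matE => i; rewrite [RHS]mxE.
  have Hf : (fun t => (mlpr_f P alpha v (xs t)) i ord0) @ \oo --> (mlpr_f P alpha v x) i ord0.
    under eq_cvg do rewrite fEi.
    rewrite fEi.
    apply: cvgB; last exact: Hc.
    apply: cvgD; last exact: cvg_cst.
    apply: cvgM; first exact: cvg_cst.
    apply: cvg_big => //; first exact: add_continuous.
    move=> s _; apply: cvgM; first exact: cvg_cst.
    apply: cvg_big => //; first exact: mul_continuous.
    move=> j _; exact: Hc.
  have Hdd : (fun t => u i t.+1 - u i t) @ \oo --> 0.
    rewrite -(subrr (x i ord0)); apply: cvgB; last exact: Hc.
    by have := Hc i; rewrite -cvg_shiftS.
  have H0 : (fun t => (mlpr_f P alpha v (xs t)) i ord0) @ \oo --> 0.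
    apply: (squeeze_cvgr _ (cvg_cst 0) Hdd); apply: nearW => t; exact: fb.
  apply/eqP; rewrite eq_le; apply/andP; split.
    by apply: (ler_cvg_to Hf H0); apply: nearW => t.
  by apply: (ler_cvg_to H0 Hf); apply: nearW => t.
have Hs : (fun t => vsum (xs t)) @ \oo --> vsum x.
  rewrite /vsum; apply: cvg_big => //; first exact: add_continuous.
  move=> i _; exact: Hc.
have S1 : vsum x <= 1.
  apply: (ler_cvg_to Hs (cvg_cst (1:R))); apply: nearW => t.
  by case: (InvT t).
have S0 : 0 <= vsum x by apply: sumr_ge0 => i _; exact: x0.
have Sx : vsum x = 1.
  have := vsum_f x; rewrite fx0.
  have -> : vsum 0 = 0 by rewrite /vsum big1 // => i _; rewrite mxE.
  have := ler_wpM2l a0 (@pow_ub R (vsum x) k S0 S1).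
  have q0 : 0 <= vsum x ^+ k by rewrite exprn_ge0.
  move: (vsum x ^+ k) q0 S0 S1 => q q0 S0' S1' h1 h2.
  have h3 : (1 - vsum x) * (1 - alpha * k%:R) <= 0 by nra.
  have h4 : 0 < 1 - alpha * k%:R by rewrite subr_gt0.
  have h5 : 1 - vsum x <= 0.
    by rewrite -(pmulr_lle0 _ h4).
  lra.
exists x; split => //.
- move=> y [y0 y1] fy.
  have yx t : nn (y - xs t).
    elim: t => [|t IH]; first by move=> i; rewrite !mxE subr0.
    by rewrite xsS; apply: step_ub.
  have le i : x i ord0 <= y i ord0.
    apply: (ler_cvg_to (Hc i) (cvg_cst _)); apply: nearW => t.
    by have := yx t i; rewrite !mxE subr_ge0.
  have sd : \sum_(i < n) (y i ord0 - x i ord0) = 0.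
    by rewrite sumrB y1 -/(vsum x) Sx subrr.
  apply: matE => i; apply/eqP; rewrite -subr_eq0; apply/eqP.
  by apply: (psumr_eq0P _ sd) => // j _; rewrite subr_ge0.
Qed.

End Mat.
Theorem theorem3p2 (R : realType) (m n : nat) (hm : (2 <= m)%N) (hn : (1 <= n)%N)
  (P : 'I_n -> {ffun 'I_m.-1 -> 'I_n} -> R) (v : 'cV[R]_n) (alpha : R) :
  transition_tensor P -> stochastic v ->
  0 <= alpha -> alpha < 1 -> alpha < ((m - 1)%N%:R)^-1 ->
  (forall t, mlpr_J P alpha (newton P alpha v t) \in unitmx) /\
  exists x : 'cV[R]_n,
    [/\ stochastic x, mlpr_f P alpha v x = 0,
        (forall y : 'cV[R]_n, stochastic y -> mlpr_f P alpha v y = 0 -> y = x) &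
        (forall i : 'I_n, (fun t : nat => newton P alpha v t i ord0) @ \oo --> (x i ord0 : R))].
Proof.
move=> [P0 P1] [v0 v1] a0 a1 aI.
have ak : alpha * (m.-1)%:R < 1.
  have K0 : 0 < (m.-1)%:R :> R by rewrite ltr0n -subn1 subn_gt0.
  rewrite subn1 in aI.
  by rewrite -[X in _ < X](@mulVf _ (m.-1)%:R) ?lt0r_neq0 // ltr_pM2r.
exact: (@main_sec R n m.-1 P P0 P1 alpha a0 ak v v0 v1 a1).
Qed.
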